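(* Hourglass persistence is more expressive than FB-persistence: for every graph $G$ with filtration function $f$, the FB-persistence sequence of $(G,f)$ is one of the hourglass sequences of $(G,f)$; and there exist graphs $G,H$ with the degree filtration whose FB-persistence diagrams coincide in all degrees, but for which some hourglass schedule (a prescribed order, in terms of the indices of the intermediate complexes, of including and contracting them), applied to both, yields different persistence diagrams.
   Context: Graphs are finite, undirected, possibly with self-loops and multi-edges. A filtration function on $G=(V,E)$ is $f:V\cup E\to\mathbb{R}$ with $f(v),f(w)\le f(e)$ for each edge $e=(v,w)$; degree filtration: $f(v)=\deg v$, $f(e)=\max(f(v),f(w))$. With distinct values $a_0<\dots<a_n$, $G_{-1}=\emptyset$, $G_i=f^{-1}((-\infty,a_i])$, and the intermediate complex $\mathrm{IC}_i(G,f)$ is the subgraph formed by the vertices and edges of $G_i\setminus G_{i-1}$ together with endpoints of those edges. Persistence diagrams of a sequence of spaces and continuous maps are those of the interval decomposition of $H_k(-;\mathbb{Z}/2)$ applied to it (indexed by positions). FB-persistence: the sequence $G_0\subset\dots\subset G_n=G\to G/\mathrm{IC}_n\to\dots\to\text{point}$ which first includes and then contracts $\mathrm{IC}_n,\mathrm{IC}_{n-1},\dots,\mathrm{IC}_0$ in turn (each contraction collapses the piece together with the point to which previously contracted pieces were collapsed). An hourglass sequence is any sequence starting at $\emptyset$ in which each step either includes (adjoins) some $\mathrm{IC}_j$, or contracts (quotients, together with the previously contracted point) some $\mathrm{IC}_j$ that has already been included, every $\mathrm{IC}_j$ being included before it is contracted; hourglass persistence diagrams are the persistence diagrams of such sequences.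 *)

(* Defs.v *)
From HB Require Import structures.
From mathcomp Require Import all_boot all_order all_algebra.
Set Implicit Arguments. Unset Strict Implicit. Unset Printing Implicit Defensive.
Import Order.TTheory GRing.Theory Num.Theory.
Local Open Scope ring_scope.

(* A finite undirected multigraph, self-loops allowed: every edge e has two
   endpoints gsrc e and gtgt e (their order is irrelevant). *)
Record graph := Graph {
  gV : finType; gE : finType; gsrc : gE -> gV; gtgt : gE -> gV }.

(* A "space" occurring in an hourglass / FB sequence: the subgraph
   (sVI, sEI) of G that has been included so far, quotiented by the subgraph
   (sVC, sEC) (union of the contracted pieces), collapsed to one point. *)
Record stage (G : graph) := Stage {
  sVI : {set gV G}; sEI : {set gE G}; sVC : {set gV G}; sEC : {set gE G} }.

Definition empty_stage (G : graph) : stage G := @Stage G set0 set0 set0 set0.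

Section Filtration.
Variables (G : graph) (R : realDomainType) (fv : gV G -> R) (fe : gE G -> R).

Definition is_filtration : Prop :=
  forall e, fv (gsrc e) <= fe e /\ fv (gtgt e) <= fe e.

(* the distinct values a_0 < ... < a_n ; nIC = n + 1 *)
Definition fvals : seq R :=
  sort (fun x y : R => x <= y)
       (undup (map fv (enum (gV G)) ++ map fe (enum (gE G)))).
Definition nIC : nat := size fvals.
Definition aval (i : nat) : R := nth 0 fvals i.

(* G_i and G_{i-1} (G_{-1} = empty) *)
Definition sublevelV (i : nat) : {set gV G} := [set v | fv v <= aval i].
Definition sublevelE (i : nat) : {set gE G} := [set e | fe e <= aval i].
Definition prevV (i : nat) : {set gV G} :=
  if i is i'.+1 then sublevelV i' else set0.
Definition prevE (i : nat) : {set gE G} :=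
  if i is i'.+1 then sublevelE i' else set0.

Definition ICE (i : nat) : {set gE G} := sublevelE i :\: prevE i.
Definition ICV (i : nat) : {set gV G} :=
  (sublevelV i :\: prevV i) :|:
  [set v | [exists e in ICE i, (gsrc e == v) || (gtgt e == v)]].

(* FB-persistence sequence G_0 ⊂ ... ⊂ G_n = G -> G/IC_n -> ... -> point *)
Definition fb_stages : seq (stage G) :=
  [seq @Stage G (sublevelV k) (sublevelE k) set0 set0 | k <- iota 0 nIC] ++
  [seq @Stage G setT setT
        (\bigcup_(i < nIC | (nIC - m <= i)%N) ICV i)
        (\bigcup_(i < nIC | (nIC - m <= i)%N) ICE i) | m <- iota 1 nIC].

(* A schedule step (true, j) = include IC_j ; (false, j) = contract IC_j. *)
Definition hg_stage (p : seq (bool * nat)) : stage G :=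
  @Stage G (\bigcup_(i < nIC | (true, val i) \in p) ICV i)
           (\bigcup_(i < nIC | (true, val i) \in p) ICE i)
           (\bigcup_(i < nIC | (false, val i) \in p) ICV i)
           (\bigcup_(i < nIC | (false, val i) \in p) ICE i).

Definition hg_stages (s : seq (bool * nat)) : seq (stage G) :=
  [seq hg_stage (take k s) | k <- iota 0 (size s).+1].

End Filtration.

Definition hourglass_schedule (N : nat) (s : seq (bool * nat)) : Prop :=
  perm_eq s ([seq (true, j) | j <- iota 0 N] ++ [seq (false, j) | j <- iota 0 N])
  /\ forall j, (j < N)%N -> (index (true, j) s < index (false, j) s)%N.

(* Cellular homology with Z/2 coefficients of the 1-dimensional CW complex
   (included subgraph)/(contracted subgraph), and ranks of the maps induced by
   inclusion/quotient between two stages.  Chains are row vectors; the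
   0-cells are indexed by option V (None = the collapsed point). *)
Section Homology.
Variable G : graph.
Local Notation V := (gV G).
Local Notation E := (gE G).
Local Notation nE := #|E|.
Local Notation nV := #|{: option V}|.

Definition vact (st : stage G) (w : option V) : bool :=
  if w is Some v then (v \in sVI st) && (v \notin sVC st) else sVC st != set0.
Definition eact (st : stage G) (e : E) : bool :=
  (e \in sEI st) && (e \notin sEC st).
Definition rho (st : stage G) (w : option V) : option V :=
  if w is Some v then (if v \in sVC st then None else Some v) else None.

Definition vdelta (w : option V) : 'rV['F_2]_nV := delta_mx 0 (enum_rank w).

Definition bdmx (st : stage G) : 'M['F_2]_(nE, nV) :=
  \matrix_(i < nE) (let e := enum_val i in
     if eact st e then vdelta (rho st (Some (gsrc e))) + vdelta (rho st (Some (gtgt e)))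
     else 0).
Definition C1mx (st : stage G) : 'M['F_2]_nE :=
  \matrix_(i < nE) (if eact st (enum_val i) then delta_mx 0 i else 0).
Definition C0mx (st : stage G) : 'M['F_2]_nV :=
  \matrix_(i < nV) (if vact st (enum_val i) then delta_mx 0 i else 0).
Definition Pmx (t : stage G) : 'M['F_2]_nE :=
  \matrix_(i < nE) (if enum_val i \in sEC t then 0 else delta_mx 0 i).
Definition Rmx (t : stage G) : 'M['F_2]_nV :=
  \matrix_(i < nV) vdelta (rho t (enum_val i)).

(* H_1 = cycles (no 2-cells) *)
Definition H1mx (st : stage G) : 'M['F_2]_nE := (C1mx st :&: kermx (bdmx st))%MS.
Definition rank1 (s t : stage G) : nat := \rank (H1mx s *m Pmx t).
(* H_0 = 0-chains / boundaries *)
Definition rank0 (s t : stage G) : nat :=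
  (\rank (C0mx s *m Rmx t + bdmx t)%MS - \rank (bdmx t))%N.
Definition hrank (k : nat) (s t : stage G) : nat :=
  match k with 0 => rank0 s t | 1 => rank1 s t | _ => 0%N end.

Definition prank (L : seq (stage G)) (k b d : nat) : nat :=
  if (b <= d < size L)%N
  then hrank k (nth (empty_stage G) L b) (nth (empty_stage G) L d) else 0%N.

(* persistence diagram: multiplicity of the interval [b, d] in the interval
   decomposition of H_k(L;Z/2), given by the inclusion-exclusion formula on
   the rank invariant. *)
Definition pdgm (L : seq (stage G)) (k b d : nat) : int :=
  if (b <= d)%N then
    (prank L k b d)%:Z - (if b is b'.+1 then (prank L k b' d)%:Z else 0)
    - (prank L k b d.+1)%:Z + (if b is b'.+1 then (prank L k b' d.+1)%:Z else 0)
  else 0.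
End Homology.

(* degree filtration; a self-loop contributes 2 to the degree *)
Definition deg (G : graph) (v : gV G) : nat :=
  (#|[set e | gsrc e == v]| + #|[set e | gtgt e == v]|)%N.
Definition degv (G : graph) : gV G -> int := fun v => (deg v)%:Z.
Definition dege (G : graph) : gE G -> int :=
  fun e => (maxn (deg (gsrc e)) (deg (gtgt e)))%:Z.

(* Main.v *)
Require Import Defs.
From HB Require Import structures.
From mathcomp Require Import all_boot all_order all_algebra.
From mathcomp Require Import zify.
Set Implicit Arguments. Unset Strict Implicit. Unset Printing Implicit Defensive.
Import Order.TTheory GRing.Theory Num.Theory.
Local Open Scope ring_scope.

Lemma F2_11 : (1 + 1 : 'F_2) = 0. Proof. by apply/val_inj. Qed.
Lemma F2_add (x y : bool) : ((x (+) y)%:R : 'F_2) = x%:R + y%:R.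
Proof. by case: x; case: y; rewrite /= ?addr0 ?add0r ?F2_11. Qed.
Lemma F2_xx (x : 'F_2) : x + x = 0.
Proof. by rewrite -mulr2n -mulr_natr -[2]/(1 + 1) F2_11 mulr0. Qed.

Lemma mxF2_xx m k (x : 'M['F_2]_(m, k)) : x + x = 0.
Proof. by apply/matrixP => i j; rewrite !mxE F2_xx. Qed.

Section Grank.
Variable n : nat.
Local Notation F := 'F_2.
Definition vec (a : seq bool) : 'rV[F]_n := \row_(j < n) (nth false a j)%:R.
Definition xorl (a b : seq bool) : seq bool :=
  mkseq (fun j => nth false a j (+) nth false b j) n.
Definition piv (a : seq bool) : nat := find (nth false a) (iota 0 n).
Definition elim (a : seq bool) (L : seq (seq bool)) :=
  [seq (if nth false b (piv a) then xorl a b else b) | b <- L].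
Fixpoint grank_f (f : nat) (L : seq (seq bool)) : nat :=
  match f, L with
  | f'.+1, a :: L' =>
      if (piv a < n)%N then (grank_f f' (elim a L')).+1 else grank_f f' L'
  | _, _ => 0%N
  end.
Definition grank L := grank_f (size L) L.
Definition spanL (L : seq (seq bool)) : 'M[F]_n := (\sum_(a <- L) <<vec a>>)%MS.

Lemma vec_xor a b : vec (xorl a b) = vec a + vec b.
Proof. by apply/rowP => j; rewrite !mxE nth_mkseq // F2_add. Qed.

Lemma vec_eq0 a : (n <= piv a)%N -> vec a = 0.
Proof.
move=> h; apply/rowP => j; rewrite !mxE.
have: ~~ has (nth false a) (iota 0 n).
  by rewrite has_find size_iota -leqNgt.
move/hasPn/(_ j); rewrite mem_iota /= ltn_ord => /(_ isT) /negbTE -> //.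
Qed.

Lemma piv_nth a : (piv a < n)%N -> nth false a (piv a).
Proof.
move=> h; have hh : has (nth false a) (iota 0 n) by rewrite has_find size_iota.
by have := nth_find 0%N hh; rewrite nth_iota.
Qed.

Lemma spanL_sub L m (B : 'M[F]_(m, n)) :
  (forall a, a \in L -> (vec a <= B)%MS) -> (spanL L <= B)%MS.
Proof.
elim: L => [|a L IH] h; first by rewrite /spanL big_nil sub0mx.
rewrite /spanL big_cons addsmx_sub genmxE h ?mem_head //=.
by apply: IH => b hb; apply: h; rewrite inE hb orbT.
Qed.

Lemma vec_sub_spanL a L : a \in L -> (vec a <= spanL L)%MS.
Proof.
elim: L => [|b L IH] //; rewrite inE /spanL big_cons => /orP [/eqP ->|h].
  by rewrite -(genmxE (vec b)) addsmxSl.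
exact: submx_trans (IH h) (addsmxSr _ _).
Qed.

Lemma rowop a L :
  (<<vec a>> + spanL L :=: <<vec a>> + spanL (elim a L))%MS.
Proof.
have key : forall b, vec (if nth false b (piv a) then xorl a b else b)
   = (if nth false b (piv a) then vec a + vec b else vec b).
  by move=> b; case: ifP => _ //; rewrite vec_xor.
apply/eqmxP/andP; split; rewrite addsmx_sub addsmxSl /=.
  apply: spanL_sub => b hb.
  have hb' := vec_sub_spanL (map_f (fun b => if nth false b (piv a) then xorl a b else b) hb).
  rewrite key in hb'.
  have ha : (vec a <= <<vec a>> + spanL (elim a L))%MS by rewrite -{1}(genmxE (vec a)) addsmxSl.
  have hs := submx_trans hb' (addsmxSr <<vec a>>%MS _).
  case: ifP hs => _ hs //.
  have -> : vec b = vec a + (vec a + vec b) by rewrite addrA mxF2_xx add0r.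
  by apply: addmx_sub.
apply: spanL_sub => b' /mapP [b hb ->].
have hs := submx_trans (vec_sub_spanL hb) (addsmxSr <<vec a>>%MS _).
have ha : (vec a <= <<vec a>> + spanL L)%MS by rewrite -{1}(genmxE (vec a)) addsmxSl.
by rewrite key; case: ifP => _ //; apply: addmx_sub.
Qed.

Lemma elim_piv a L b : (piv a < n)%N -> b \in elim a L -> nth false b (piv a) = false.
Proof.
move=> h /mapP [c hc ->]; case: ifP => // hcp.
by rewrite nth_mkseq // piv_nth // hcp.
Qed.

Lemma rank_cons a L : (piv a < n)%N ->
  \rank (<<vec a>> + spanL (elim a L))%MS = (\rank (spanL (elim a L))).+1.
Proof.
move=> h; set p := Ordinal h.
set c : 'M[F]_(n, 1) := delta_mx p 0.
have hv : forall u : 'rV[F]_n, (u *m c) 0 0 = u 0 p.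
  by move=> u; rewrite -colE mxE.
have hS : (spanL (elim a L) <= kermx c)%MS.
  apply: spanL_sub => b hb; apply/sub_kermxP; apply/rowP => i.
  by rewrite ord1 hv !mxE /= (elim_piv h hb).
have ha : vec a 0 p = 1 by rewrite mxE /= piv_nth.
have nz : vec a != 0.
  by apply/eqP => e; move: ha; rewrite e mxE => /esym/eqP; rewrite oner_eq0.
rewrite mxrank_disjoint_sum.
  by rewrite genmxE rank_rV nz.
apply/eqP; rewrite -submx0; apply/row_subP => i.
set r := row i _.
have: (r <= <<vec a>> :&: spanL (elim a L))%MS by exact: row_sub.
rewrite sub_capmx genmxE => /andP [/sub_rVP [k ->] hk].
have := submx_trans hk hS; move/sub_kermxP => /rowP /(_ 0).
rewrite hv !mxE /= piv_nth // mulr1 => ->; by rewrite scale0r sub0mx.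
Qed.

Lemma grank_fP f L : (size L <= f)%N -> \rank (spanL L) = grank_f f L.
Proof.
elim: f L => [|f IH] [|a L] hs.
- by rewrite /spanL big_nil mxrank0.
- by [].
- by rewrite /spanL big_nil mxrank0.
change (grank_f f.+1 (a :: L)) with
  (if (piv a < n)%N then (grank_f f (elim a L)).+1 else grank_f f L).
rewrite /spanL big_cons -/(spanL L).
case: ifP => h.
  have e : (<<vec a>> + spanL L == <<vec a>> + spanL (elim a L))%MS.
    by apply/eqmxP; exact: rowop.
  rewrite (eqmx_rank e) (rank_cons L h) (IH (elim a L)) //.
  by rewrite size_map.
rewrite vec_eq0; last by rewrite leqNgt h.
rewrite genmx0.
have e : ((0 : 'M[F]_n) + spanL L == spanL L)%MS by apply/eqmxP; exact: adds0mx.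
by rewrite (eqmx_rank e) IH.
Qed.

Lemma grankP L : \rank (spanL L) = grank L.
Proof. exact: grank_fP. Qed.

Lemma eqmx_rows (I : finType) (M : 'M[F]_(#|I|, n)) (f : I -> seq bool) :
  (forall i, row i M = vec (f (enum_val i))) ->
  (M :=: spanL (map f (enum I)))%MS.
Proof.
move=> h; apply/eqmxP/andP; split.
  apply/row_subP => i; rewrite h; apply: vec_sub_spanL.
  by apply: map_f; rewrite mem_enum.
apply: spanL_sub => a /mapP [x _ ->].
have := h (enum_rank x); rewrite enum_rankK => <-.
exact: row_sub.
Qed.

End Grank.

Lemma rank_rows n (I : finType) (M : 'M['F_2]_(#|I|, n)) (f : I -> seq bool) :
  (forall i, row i M = vec n (f (enum_val i))) -> \rank M = grank n (map f (enum I)).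
Proof.
move=> h; rewrite -grankP; apply: eqmx_rank; apply/eqmxP; exact: eqmx_rows.
Qed.

Lemma enum_val_eq (T : finType) (j : 'I_#|T|) (x : T) :
  (enum_val j == x) = (j == enum_rank x).
Proof.
apply/eqP/eqP => [<-|->]; [by rewrite enum_valK | by rewrite enum_rankK].
Qed.

Lemma delta_vec (T : finType) (x : T) :
  delta_mx 0 (enum_rank x) = vec #|T| [seq y == x | y <- enum T].
Proof.
apply/rowP => j; rewrite !mxE (nth_map x); last by rewrite -cardE ltn_ord.
by rewrite -enum_val_nth enum_val_eq eqxx.
Qed.

Lemma vec_nil n : vec n [::] = 0.
Proof. by apply/rowP => j; rewrite !mxE nth_nil. Qed.

Section GraphRank.
Variable G : graph.
Local Notation V := (gV G).
Local Notation E := (gE G).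
Local Notation n0 := #|{: option V}|.
Local Notation nE := #|E|.

Definition bdrowF (ea : E -> bool) (rh : option V -> option V) (lO : seq (option V)) (e : E) :=
  [seq ea e && ((w == rh (Some (gsrc e))) (+) (w == rh (Some (gtgt e)))) | w <- lO].
Definition c0rowF (va : option V -> bool) (rh : option V -> option V) (lO : seq (option V)) w :=
  [seq va w && (w' == rh w) | w' <- lO].
Definition prrowF (A : E -> bool) (lE : seq E) (e : E) :=
  if A e then [seq e' == e | e' <- lE] else [::].
Definition mrowF (A ea : E -> bool) (rh : option V -> option V) lO (e : E) :=
  if A e then bdrowF ea rh lO e else [::].

Local Notation lO := (enum {: option V}).
Local Notation lE := (enum E).

Lemma row_bdmx (st : stage G) i :
  row i (bdmx st) = vec n0 (bdrowF (eact st) (rho st) lO (enum_val i)).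
Proof.
rewrite rowK /=; apply/rowP => j; rewrite !mxE (nth_map None); last by rewrite -cardE ltn_ord.
rewrite -enum_val_nth; case: (eact st (enum_val i)) => /=; last by rewrite mxE.
by rewrite !mxE F2_add !enum_val_eq.
Qed.

Lemma row_C0R (s t : stage G) i :
  row i (C0mx s *m Rmx t) = vec n0 (c0rowF (vact s) (rho t) lO (enum_val i)).
Proof.
rewrite row_mul rowK; case: ifP => h.
  rewrite -rowE rowK /vdelta delta_vec; congr vec.
  by rewrite /c0rowF h.
rewrite mul0mx; apply/rowP => j; rewrite !mxE (nth_map None); last by rewrite -cardE ltn_ord.
by rewrite h.
Qed.

Definition Pr (A : E -> bool) : 'M['F_2]_nE :=
  \matrix_(i < nE) (if A (enum_val i) then delta_mx 0 i else 0).

Lemma row_Pr (A : E -> bool) i : row i (Pr A) = vec nE (prrowF A lE (enum_val i)).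
Proof.
rewrite rowK /prrowF; case: ifP => _; last by rewrite vec_nil.
by rewrite -delta_vec enum_valK.
Qed.

Lemma row_Prbd (A : E -> bool) (st : stage G) i :
  row i (Pr A *m bdmx st) = vec n0 (mrowF A (eact st) (rho st) lO (enum_val i)).
Proof.
rewrite row_mul rowK /mrowF; case: ifP => _; last by rewrite mul0mx vec_nil.
by rewrite -rowE row_bdmx.
Qed.

Lemma Pr_entry (A : E -> bool) (u : 'rV['F_2]_nE) j :
  (u *m Pr A) 0 j = if A (enum_val j) then u 0 j else 0.
Proof.
rewrite !mxE (bigD1 j) //= big1 => [|k hk].
  rewrite !mxE; case: ifP => _; rewrite !mxE ?eqxx ?mulr1 ?mulr0 ?addr0 //.
rewrite !mxE; case: ifP => _; rewrite !mxE ?mulr0 //.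
have hk' : (j == k) = false by rewrite eq_sym (negbTE hk).
by rewrite hk' andbF mulr0.
Qed.

Lemma PrP (A : E -> bool) (u : 'rV['F_2]_nE) :
  reflect (forall j, ~~ A (enum_val j) -> u 0 j = 0) (u <= Pr A)%MS.
Proof.
apply: (iffP idP).
  move/submxP => [w ->] j hj; by rewrite Pr_entry (negbTE hj).
move=> h; have -> : u = u *m Pr A.
  apply/rowP => j; rewrite Pr_entry; case: ifP => // hj.
  by rewrite h // hj.
exact: submxMl.
Qed.

Lemma kerPrP (A : E -> bool) (u : 'rV['F_2]_nE) :
  reflect (forall j, A (enum_val j) -> u 0 j = 0) (u <= kermx (Pr A))%MS.
Proof.
apply: (iffP sub_kermxP).
  move=> h j hj; move/rowP/(_ j): h; by rewrite Pr_entry hj mxE.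
move=> h; apply/rowP => j; rewrite Pr_entry mxE; case: ifP => // hj; exact: h.
Qed.

Lemma Pmx_Pr (t : stage G) : Pmx t = Pr (fun e => e \notin sEC t).
Proof. by apply/row_matrixP => i; rewrite !rowK; case: ifP. Qed.

Lemma C1mx_Pr (st : stage G) : C1mx st = Pr (eact st).
Proof. by []. Qed.

Lemma rank_eq_sub n (X Y : 'M['F_2]_n) :
  (forall u : 'rV_n, (u <= X)%MS = (u <= Y)%MS) -> \rank X = \rank Y.
Proof.
move=> h; apply: eqmx_rank; apply/andP; split; apply/row_subP => i.
  by rewrite -h row_sub.
by rewrite h row_sub.
Qed.

Lemma rank0E (s t : stage G) :
  rank0 s t = (grank n0 (map (c0rowF (vact s) (rho t) lO) lO ++ map (bdrowF (eact t) (rho t) lO) lE)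
             - grank n0 (map (bdrowF (eact t) (rho t) lO) lE))%N.
Proof.
rewrite /rank0 (rank_rows (row_bdmx t)); congr (_ - _)%N.
rewrite -grankP; apply: eqmx_rank; apply/eqmxP.
rewrite /spanL big_cat /=.
apply: adds_eqmx; apply: eqmx_rows; [exact: row_C0R | exact: row_bdmx].
Qed.

Lemma rank1E (s t : stage G) :
  let D := fun e => eact s e && (e \in sEC t) in
  rank1 s t =
  ((grank nE (map (prrowF (eact s) lE) lE) - grank n0 (map (mrowF (eact s) (eact s) (rho s) lO) lE))
   - (grank nE (map (prrowF D lE) lE) - grank n0 (map (mrowF D (eact s) (rho s) lO) lE)))%N.
Proof.
move=> D.
rewrite -(rank_rows (row_Pr _)) -(rank_rows (row_Prbd _ _)).
rewrite -(rank_rows (row_Pr _)) -(rank_rows (row_Prbd _ _)).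
rewrite /rank1.
have h1 := mxrank_mul_ker (H1mx s) (Pmx t).
have h2 := mxrank_mul_ker (Pr (eact s)) (bdmx s).
have h3 := mxrank_mul_ker (Pr D) (bdmx s).
have e1 : \rank (H1mx s) = \rank (Pr (eact s) :&: kermx (bdmx s))%MS by [].
have e2 : \rank (H1mx s :&: kermx (Pmx t))%MS = \rank (Pr D :&: kermx (bdmx s))%MS.
  apply: rank_eq_sub => u; rewrite /H1mx C1mx_Pr Pmx_Pr !sub_capmx.
  rewrite -andbA andbCA andbC; congr (_ && _).
  apply/andP/PrP => [[/PrP h /kerPrP h'] j|h].
    rewrite /D negb_and => /orP [hj|hj]; first exact: h.
    by apply: h' => /=.
  split; [apply/PrP => j hj | apply/kerPrP => j hj]; apply: h; rewrite /D negb_and.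
    by rewrite hj.
  by rewrite /= in hj; rewrite hj orbT.
rewrite -h2 -h3 !addKn -e1 -h1 e2 addnK; done.
Qed.

End GraphRank.

Lemma enum_option (T : finType) : enum {: option T} = None :: map Some (enum T).
Proof.
rewrite enumT /enum_mem {1}Finite.enum.unlock.
rewrite (@eq_filter _ _ predT) // filter_predT. reflexivity.
Qed.

Lemma card_setE (T : finType) (P : pred T) : #|[set x | P x]| = count P (enum T).
Proof.
rewrite cardE (@eq_enum _ _ P); last by move=> x; rewrite !inE.
by rewrite enumT /enum_mem size_filter.
Qed.

Lemma bigcup_has (T : finType) N (P : pred nat) (F : nat -> {set T}) x :
  (x \in \bigcup_(i < N | P i) F i) = has (fun i => P i && (x \in F i)) (iota 0 N).
Proof.
apply/bigcupP/hasP => [[i Pi xi]|[i hi /andP [Pi xi]]].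
  by exists (val i); rewrite ?mem_iota ?Pi ?xi //= ltn_ord.
have hi' : (i < N)%N by move: hi; rewrite mem_iota.
by exists (Ordinal hi').
Qed.

Lemma bigcup_hasP (T : finType) N (P : 'I_N -> bool) (F : 'I_N -> {set T})
  (Q : nat -> bool) x :
  (forall i : 'I_N, Q i = P i && (x \in F i)) ->
  (x \in \bigcup_(i < N | P i) F i) = has Q (iota 0 N).
Proof.
move=> hQ; apply/bigcupP/hasP => [[i Pi xi]|[i hi]].
  by exists (val i); rewrite ?mem_iota ?hQ ?Pi ?xi //= ltn_ord.
have hi' : (i < N)%N by move: hi; rewrite mem_iota.
by rewrite -[i]/(val (Ordinal hi')) hQ => /andP [h1 h2]; exists (Ordinal hi').
Qed.

Record cst (V E : Type) := CSt { cVI : V -> bool; cEI : E -> bool; cVC : V -> bool; cEC : E -> bool }.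

Section CLayer.
Variable G : graph.
Local Notation V := (gV G).
Local Notation E := (gE G).
Variables (lV : seq V) (lE : seq E).

Definition corr (st : stage G) (cs : cst V E) :=
  [/\ forall v, (v \in sVI st) = cVI cs v, forall e, (e \in sEI st) = cEI cs e,
      forall v, (v \in sVC st) = cVC cs v & forall e, (e \in sEC st) = cEC cs e].

Definition ceact (cs : cst V E) e := cEI cs e && ~~ cEC cs e.
Definition crho (cs : cst V E) (w : option V) :=
  if w is Some v then (if cVC cs v then None else Some v) else None.
Definition cvact (cs : cst V E) (w : option V) :=
  if w is Some v then cVI cs v && ~~ cVC cs v else has (cVC cs) lV.
Definition clO := None :: map Some lV.

Definition crank0 (s t : cst V E) :=
  (grank (size clO) (map (c0rowF (cvact s) (crho t) clO) clO ++ map (bdrowF (ceact t) (crho t) clO) lE)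
   - grank (size clO) (map (bdrowF (ceact t) (crho t) clO) lE))%N.
Definition crank1 (s t : cst V E) :=
  let D := fun e => ceact s e && cEC t e in
  ((grank (size lE) (map (prrowF (ceact s) lE) lE)
    - grank (size clO) (map (mrowF (ceact s) (ceact s) (crho s) clO) lE))
   - (grank (size lE) (map (prrowF D lE) lE)
    - grank (size clO) (map (mrowF D (ceact s) (crho s) clO) lE)))%N.
Definition chrank k s t := match k with 0 => crank0 s t | 1 => crank1 s t | _ => 0%N end.

Definition cdflt : cst V E := CSt pred0 pred0 pred0 pred0.

Definition cprank (cL : seq (cst V E)) (k b d : nat) : nat :=
  if (b <= d < size cL)%N then chrank k (nth cdflt cL b) (nth cdflt cL d) else 0%N.

Definition cpdgm (cL : seq (cst V E)) (k b d : nat) : int :=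
  if (b <= d)%N then
    (cprank cL k b d)%:Z - (if b is b'.+1 then (cprank cL k b' d)%:Z else 0)
    - (cprank cL k b d.+1)%:Z + (if b is b'.+1 then (cprank cL k b' d.+1)%:Z else 0)
  else 0.

Fixpoint corrL (L : seq (stage G)) (cL : seq (cst V E)) : Prop :=
  match L, cL with
  | [::], [::] => True
  | a :: L', b :: cL' => corr a b /\ corrL L' cL'
  | _, _ => False
  end.

Lemma corrL_size L cL : corrL L cL -> size L = size cL.
Proof. by elim: L cL => [|a L IH] [|b cL] //= [_ /IH ->]. Qed.

Lemma corrL_nth L cL i : corrL L cL -> (i < size L)%N ->
  corr (nth (empty_stage G) L i) (nth cdflt cL i).
Proof.
elim: L cL i => [|a L IH] [|b cL] [|i] //= [h1 h2] hi //; exact: IH.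
Qed.

Lemma corrL_cat L1 L2 cL1 cL2 : corrL L1 cL1 -> corrL L2 cL2 -> corrL (L1 ++ L2) (cL1 ++ cL2).
Proof. by elim: L1 cL1 => [|a L IH] [|b cL] //= [h1 h2] h3; split => //; apply: IH. Qed.

Lemma corrL_map (T : Type) (f : T -> stage G) (g : T -> cst V E) s :
  (forall x, corr (f x) (g x)) -> corrL (map f s) (map g s).
Proof. by move=> h; elim: s => //= x s IH; split. Qed.

Hypotheses (hV : enum V = lV) (hE : enum E = lE).

Lemma cardO : #|{: option V}| = size clO.
Proof. by rewrite cardE enum_option hV. Qed.
Lemma cardEE : #|E| = size lE.
Proof. by rewrite cardE hE. Qed.

Section Corr.
Variables (st : stage G) (cs : cst V E).
Hypothesis h : corr st cs.
Lemma corr_eact : eact st =1 ceact cs.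
Proof. by case: h => h1 h2 h3 h4 e; rewrite /eact /ceact h2 h4. Qed.
Lemma corr_rho : rho st =1 crho cs.
Proof. by case: h => h1 h2 h3 h4 [v|] //=; rewrite h3. Qed.
Lemma corr_vact : vact st =1 cvact cs.
Proof.
case: h => h1 h2 h3 h4 [v|] /=; first by rewrite h1 h3.
apply/set0Pn/hasP => [[v hv]|[v _ hv]].
  by exists v; [rewrite -hV mem_enum | rewrite -h3].
by exists v; rewrite h3.
Qed.
End Corr.

Lemma c0rowF_ext va va' rh rh' (l : seq (option V)) w :
  va =1 va' -> rh =1 rh' -> c0rowF va rh l w = c0rowF va' rh' l w.
Proof. by move=> h1 h2; rewrite /c0rowF h1 h2. Qed.
Lemma bdrowF_ext ea ea' rh rh' (l : seq (option V)) e :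
  ea =1 ea' -> rh =1 rh' -> bdrowF ea rh l e = bdrowF ea' rh' l e.
Proof. by move=> h1 h2; rewrite /bdrowF h1 !h2. Qed.
Lemma prrowF_ext (A A' : E -> bool) (l : seq E) e :
  A =1 A' -> prrowF A l e = prrowF A' l e.
Proof. by move=> h1; rewrite /prrowF h1. Qed.
Lemma mrowF_ext (A A' : E -> bool) ea ea' rh rh' (l : seq (option V)) e :
  A =1 A' -> ea =1 ea' -> rh =1 rh' -> mrowF A ea rh l e = mrowF A' ea' rh' l e.
Proof. by move=> h1 h2 h3; rewrite /mrowF h1; case: ifP => // _; apply: bdrowF_ext. Qed.

Lemma rank0_c s t cs ct : corr s cs -> corr t ct -> rank0 s t = crank0 cs ct.
Proof.
move=> hs ht; rewrite rank0E cardO enum_option hV hE /crank0 -/clO.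
have e1 : map (c0rowF (vact s) (rho t) clO) clO = map (c0rowF (cvact cs) (crho ct) clO) clO.
  by apply: eq_map => w; apply: c0rowF_ext; [apply: corr_vact | apply: corr_rho].
have e2 : map (bdrowF (eact t) (rho t) clO) lE = map (bdrowF (ceact ct) (crho ct) clO) lE.
  by apply: eq_map => w; apply: bdrowF_ext; [apply: corr_eact | apply: corr_rho].
by rewrite e1 e2.
Qed.

Lemma rank1_c s t cs ct : corr s cs -> corr t ct -> rank1 s t = crank1 cs ct.
Proof.
move=> hs ht; rewrite rank1E cardO cardEE enum_option hV hE /crank1 -/clO.
have hD : (fun e => eact s e && (e \in sEC t)) =1 (fun e => ceact cs e && cEC ct e).
  by case: ht => _ _ _ h4 e; rewrite (corr_eact hs) h4.
have ea := corr_eact hs; have rh := corr_rho hs.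
rewrite (eq_map (fun e => prrowF_ext lE e ea)).
rewrite (eq_map (fun e => prrowF_ext lE e hD)).
rewrite (eq_map (fun e => mrowF_ext clO e ea ea rh)).
by rewrite (eq_map (fun e => mrowF_ext clO e hD ea rh)).
Qed.

Lemma pdgm_c L cL : corrL L cL -> forall k b d, pdgm L k b d = cpdgm cL k b d.
Proof.
move=> hL.
have hp : forall k b d, prank L k b d = cprank cL k b d.
  move=> k b d; rewrite /prank /cprank (corrL_size hL); case: ifP => // /andP [hbd hd].
  have hb : (b < size L)%N by rewrite (corrL_size hL); apply: leq_ltn_trans hd.
  have hd' : (d < size L)%N by rewrite (corrL_size hL).
  have cb := corrL_nth hL hb; have cd := corrL_nth hL hd'.
  case: k => [|[|k]] //=; [exact: rank0_c | exact: rank1_c].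
by move=> k [|b] d; rewrite /pdgm /cpdgm !hp.
Qed.

End CLayer.

Section CFilt.
Variable G : graph.
Local Notation V := (gV G).
Local Notation E := (gE G).
Variables (lV : seq V) (lE : seq E).
Variables (R : realDomainType) (cfv : V -> R) (cfe : E -> R).

Definition cfvals := sort (fun x y : R => x <= y) (undup (map cfv lV ++ map cfe lE)).
Definition cnIC := size cfvals.
Definition caval i := nth 0 cfvals i.
Definition csubV k v := cfv v <= caval k.
Definition csubE k e := cfe e <= caval k.
Definition cprevV k v := if k is k'.+1 then csubV k' v else false.
Definition cprevE k e := if k is k'.+1 then csubE k' e else false.
Definition cICE i e := csubE i e && ~~ cprevE i e.
Definition cICV i v := (csubV i v && ~~ cprevV i v) ||
  has (fun e => cICE i e && ((gsrc e == v) || (gtgt e == v))) lE.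

Definition cfb : seq (cst V E) :=
  [seq CSt (csubV k) (csubE k) pred0 pred0 | k <- iota 0 cnIC] ++
  [seq CSt predT predT (fun v => has (fun i => (cnIC - m <= i)%N && cICV i v) (iota 0 cnIC))
        (fun e => has (fun i => (cnIC - m <= i)%N && cICE i e) (iota 0 cnIC)) | m <- iota 1 cnIC].

Definition chg (p : seq (bool * nat)) : cst V E :=
  CSt (fun v => has (fun i => ((true, i) \in p) && cICV i v) (iota 0 cnIC))
      (fun e => has (fun i => ((true, i) \in p) && cICE i e) (iota 0 cnIC))
      (fun v => has (fun i => ((false, i) \in p) && cICV i v) (iota 0 cnIC))
      (fun e => has (fun i => ((false, i) \in p) && cICE i e) (iota 0 cnIC)).

Definition chgs (s : seq (bool * nat)) := [seq chg (take k s) | k <- iota 0 (size s).+1].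

Variables (fv : V -> R) (fe : E -> R).
Hypotheses (hfv : fv =1 cfv) (hfe : fe =1 cfe) (hV : enum V = lV) (hE : enum E = lE).

Lemma fvalsE : fvals fv fe = cfvals.
Proof. by rewrite /fvals hV hE (eq_map hfv) (eq_map hfe). Qed.
Lemma nICE : nIC fv fe = cnIC.
Proof. by rewrite /nIC fvalsE. Qed.
Lemma avalE i : aval fv fe i = caval i.
Proof. by rewrite /aval fvalsE. Qed.

Lemma subVE k v : (v \in sublevelV fv fe k) = csubV k v.
Proof. by rewrite inE hfv avalE. Qed.
Lemma subEE k e : (e \in sublevelE fv fe k) = csubE k e.
Proof. by rewrite inE hfe avalE. Qed.
Lemma prevVE k v : (v \in prevV fv fe k) = cprevV k v.
Proof. by case: k => [|k] /=; rewrite ?subVE ?inE. Qed.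
Lemma prevEE k e : (e \in Defs.prevE fv fe k) = cprevE k e.
Proof. by case: k => [|k] /=; rewrite ?subEE ?inE. Qed.
Lemma ICEE i e : (e \in ICE fv fe i) = cICE i e.
Proof. by rewrite /ICE in_setD subEE prevEE andbC. Qed.
Lemma ICVE i v : (v \in ICV fv fe i) = cICV i v.
Proof.
rewrite /ICV in_setU in_setD subVE prevVE andbC inE; congr (_ || _).
apply/existsP/hasP => [[e /andP [h1 h2]]|[e he /andP [h1 h2]]].
  by exists e; [rewrite -hE mem_enum | rewrite -ICEE h1].
by exists e; rewrite ICEE h1.
Qed.

Lemma corr_fb : corrL (fb_stages fv fe) cfb.
Proof.
rewrite /fb_stages.
have -> : cfb =
  [seq CSt (csubV k) (csubE k) pred0 pred0 | k <- iota 0 (nIC fv fe)] ++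
  [seq CSt predT predT (fun v => has (fun i => (cnIC - m <= i)%N && cICV i v) (iota 0 cnIC))
        (fun e => has (fun i => (cnIC - m <= i)%N && cICE i e) (iota 0 cnIC)) | m <- iota 1 (nIC fv fe)].
  by rewrite nICE.
apply: corrL_cat; apply: corrL_map => k; split => x /=; rewrite ?subVE ?subEE ?inE //;
  rewrite -nICE; apply: bigcup_hasP => i; by rewrite ?ICVE ?ICEE.
Qed.

Lemma corr_hg s : corrL (hg_stages fv fe s) (chgs s).
Proof.
apply: corrL_map => k; split => x /=; rewrite -nICE; apply: bigcup_hasP => i;
  by rewrite ?ICVE ?ICEE.
Qed.

End CFilt.

Section Deg.
Variable G : graph.
Local Notation V := (gV G).
Local Notation E := (gE G).
Variables (lV : seq V) (lE : seq E).
Definition cdeg (v : V) : nat :=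
  (count (fun e => gsrc e == v) lE + count (fun e => gtgt e == v) lE)%N.
Definition cdegv (v : V) : int := (cdeg v)%:Z.
Definition cdege (e : E) : int := (maxn (cdeg (gsrc e)) (cdeg (gtgt e)))%:Z.
Hypothesis hE : enum E = lE.
Lemma degE v : deg v = cdeg v.
Proof. by rewrite /deg !card_setE hE. Qed.
Lemma degvE : @degv G =1 cdegv.
Proof. by move=> v; rewrite /degv degE. Qed.
Lemma degeE : @dege G =1 cdege.
Proof. by move=> e; rewrite /dege !degE. Qed.
End Deg.

Definition fbsched (N : nat) : seq (bool * nat) :=
  [seq (true, j) | j <- iota 0 N] ++ [seq (false, j) | j <- rev (iota 0 N)].

Lemma index_iota0 N i : (i < N)%N -> index i (iota 0 N) = i.
Proof.
move=> h; have hm : i \in iota 0 N by rewrite mem_iota.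
have hs : (index i (iota 0 N) < N)%N by rewrite -{2}(size_iota 0 N) index_mem.
by have := nth_index 0%N hm; rewrite nth_iota.
Qed.

Lemma index_rev_iota N i : (i < N)%N -> index i (rev (iota 0 N)) = (N - i.+1)%N.
Proof.
move=> h; have hm : i \in rev (iota 0 N) by rewrite mem_rev mem_iota.
have hs : (index i (rev (iota 0 N)) < N)%N by rewrite -{2}(size_iota 0 N) -size_rev index_mem.
have := nth_index 0%N hm; rewrite nth_rev ?size_iota // nth_iota; lia.
Qed.

Lemma idx_true N i : (i < N)%N -> index (true, i) (fbsched N) = i.
Proof.
move=> h; rewrite /fbsched index_cat map_f ?mem_iota //.
by rewrite index_map ?index_iota0 //; move=> x y [].
Qed.

Lemma idx_false N i : (i < N)%N -> index (false, i) (fbsched N) = (N + (N - i.+1))%N.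
Proof.
move=> h; rewrite /fbsched index_cat.
have -> : ((false, i) \in [seq (true, j) | j <- iota 0 N]) = false.
  by apply/negbTE/mapP => [[j _ []]].
by rewrite size_map size_iota index_map ?index_rev_iota //; move=> x y [].
Qed.

Lemma mem_sched (N t : nat) b i : (i < N)%N -> (b, i) \in fbsched N.
Proof.
move=> h; rewrite /fbsched mem_cat; case: b.
  by rewrite map_f ?mem_iota.
by rewrite orbC map_f // mem_rev mem_iota.
Qed.

Lemma mem_true N t i : (i < N)%N -> ((true, i) \in take t (fbsched N)) = (i < t)%N.
Proof. by move=> h; rewrite in_take ?idx_true // (mem_sched 0). Qed.

Lemma mem_false N t i : (i < N)%N ->
  ((false, i) \in take t (fbsched N)) = (N + (N - i.+1) < t)%N.
Proof. by move=> h; rewrite in_take ?idx_false // (mem_sched 0). Qed.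

Lemma sched_ok N : hourglass_schedule N (fbsched N).
Proof.
split.
  rewrite /fbsched perm_cat2l map_rev; apply/permPl; exact: perm_rev.
by move=> j hj; rewrite idx_true // idx_false //; lia.
Qed.

Section Part1.
Variables (R : realDomainType) (G : graph) (fv : gV G -> R) (fe : gE G -> R).
Hypothesis hf : is_filtration fv fe.
Local Notation N := (nIC fv fe).

Lemma aval_mono i j : (i <= j)%N -> (j < N)%N -> aval fv fe i <= aval fv fe j.
Proof.
move=> hij hj; rewrite /aval.
have hs : sorted (fun x y : R => x <= y) (fvals fv fe).
  by apply: sort_sorted => x y; exact: le_total.
apply: (sorted_leq_nth le_trans lexx) => //; rewrite inE.
  exact: leq_ltn_trans hj.
Qed.

Lemma fv_in v : fv v \in fvals fv fe.
Proof. by rewrite mem_sort mem_undup mem_cat map_f ?mem_enum. Qed.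
Lemma fe_in e : fe e \in fvals fv fe.
Proof. by rewrite mem_sort mem_undup mem_cat orbC map_f ?mem_enum. Qed.

Lemma KE k : (k < N)%N -> \bigcup_(i < N | (i < k.+1)%N) ICE fv fe i = sublevelE fv fe k.
Proof.
move=> hk; apply/setP => e; apply/bigcupP/idP.
  move=> [i hi]; rewrite /ICE in_setD !inE => /andP [_ h].
  apply: le_trans h (aval_mono _ hk); by [].
rewrite inE => he.
have ex : exists j, fe e <= aval fv fe j by exists k.
case: (ex_minnP ex) => i hi hmin.
have hik : (i <= k)%N by apply: hmin.
have hiN : (i < N)%N by apply: leq_ltn_trans hk.
exists (Ordinal hiN) => //=; rewrite /ICE in_setD inE hi andbT.
case: i hi hmin {hik hiN} => [|i] hi hmin //=; first by rewrite inE.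
rewrite inE; apply/negP => h; have := hmin _ h; by rewrite ltnn.
Qed.

Lemma KV k : (k < N)%N -> \bigcup_(i < N | (i < k.+1)%N) ICV fv fe i = sublevelV fv fe k.
Proof.
move=> hk; apply/setP => v; apply/bigcupP/idP.
  move=> [i hi]; rewrite /ICV in_setU in_setD !inE => /orP [/andP [_ h]|].
    apply: le_trans h (aval_mono _ hk); by [].
  move=> /existsP [e /andP [he hv]].
  move: he; rewrite /ICE in_setD inE => /andP [_ he].
  have hve : fv v <= fe e.
    by case: (hf e) => h1 h2; case/orP: hv => /eqP <-.
  apply: le_trans hve (le_trans he (aval_mono _ hk)); by [].
rewrite inE => hv.
have ex : exists j, fv v <= aval fv fe j by exists k.
case: (ex_minnP ex) => i hi hmin.
have hik : (i <= k)%N by apply: hmin.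
have hiN : (i < N)%N by apply: leq_ltn_trans hk.
exists (Ordinal hiN) => //=; rewrite /ICV in_setU in_setD [v \in sublevelV _ _ _]inE hi andbT.
case: i hi hmin {hik hiN} => [|i] hi hmin; first by rewrite /prevV /= in_set0.
rewrite /prevV /=.
apply/orP; left; apply/negP; rewrite /sublevelV inE => h; have := hmin _ h; by rewrite ltnn.
Qed.

Lemma allV : \bigcup_(i < N) ICV fv fe i = setT.
Proof.
apply/setP => v; rewrite inE; apply/bigcupP.
set j := index (fv v) (fvals fv fe).
have hj : (j < N)%N by rewrite /j index_mem fv_in.
have : v \in sublevelV fv fe j by rewrite inE /aval /j nth_index ?fv_in.
rewrite -(KV hj) => /bigcupP [i _ hi]; by exists i.
Qed.

Lemma allE : \bigcup_(i < N) ICE fv fe i = setT.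
Proof.
apply/setP => e; rewrite inE; apply/bigcupP.
set j := index (fe e) (fvals fv fe).
have hj : (j < N)%N by rewrite /j index_mem fe_in.
have : e \in sublevelE fv fe j by rewrite inE /aval /j nth_index ?fe_in.
rewrite -(KE hj) => /bigcupP [i _ hi]; by exists i.
Qed.

Lemma hg_fb : hg_stages fv fe (fbsched N) = empty_stage G :: fb_stages fv fe.
Proof.
rewrite /hg_stages size_cat !size_map size_rev size_iota /=.
rewrite take0; congr (_ :: _).
  by rewrite /hg_stage /empty_stage !big_pred0.
rewrite iotaD map_cat /fb_stages; congr (_ ++ _).
  rewrite (iotaDl 1 0) -map_comp; apply/eq_in_map => k; rewrite mem_iota => /andP [_ hk] /=.
  rewrite add1n in hk *.
  rewrite /hg_stage; f_equal.
  - by rewrite -(KV hk); apply: eq_bigl => i; rewrite (@mem_true _ _ _ (ltn_ord i)).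
  - by rewrite -(KE hk); apply: eq_bigl => i; rewrite (@mem_true _ _ _ (ltn_ord i)).
  - by rewrite big_pred0 // => i; rewrite (@mem_false _ _ _ (ltn_ord i)); apply/negbTE; rewrite -leqNgt; lia.
  - by rewrite big_pred0 // => i; rewrite (@mem_false _ _ _ (ltn_ord i)); apply/negbTE; rewrite -leqNgt; lia.
rewrite addnC iotaDl -map_comp; apply/eq_in_map => m; rewrite mem_iota => /andP [h1 h2] /=.
rewrite /hg_stage; f_equal.
- by rewrite -allV; apply: eq_bigl => i; rewrite (@mem_true _ _ _ (ltn_ord i)) // ltn_addr.
- by rewrite -allE; apply: eq_bigl => i; rewrite (@mem_true _ _ _ (ltn_ord i)) // ltn_addr.
- apply: eq_bigl => i; rewrite (@mem_false _ _ _ (ltn_ord i)); apply/idP/idP; lia.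
- apply: eq_bigl => i; rewrite (@mem_false _ _ _ (ltn_ord i)); apply/idP/idP; lia.
Qed.

End Part1.

Lemma part1 : forall (R : realDomainType) (G : graph) (fv : gV G -> R) (fe : gE G -> R),
      is_filtration fv fe ->
      exists s : seq (bool * nat),
        hourglass_schedule (nIC fv fe) s /\
        hg_stages fv fe s = empty_stage G :: fb_stages fv fe.
Proof.
move=> R G fv fe hf; exists (fbsched (nIC fv fe)); split; first exact: sched_ok.
exact: hg_fb.
Qed.

Section DegWrap.
Variable G : graph.
Variables (lV : seq (gV G)) (lE : seq (gE G)).
Hypotheses (hV : enum (gV G) = lV) (hE : enum (gE G) = lE).

Lemma pdgm_fb_deg k b d :
  pdgm (fb_stages (@degv G) (@dege G)) k b d
  = cpdgm lV lE (cfb lV lE (cdegv lE) (cdege lE)) k b d.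
Proof.
apply: pdgm_c => //; apply: corr_fb => //; [exact: degvE | exact: degeE].
Qed.

Lemma pdgm_hg_deg s k b d :
  pdgm (hg_stages (@degv G) (@dege G) s) k b d
  = cpdgm lV lE (chgs lV lE (cdegv lE) (cdege lE) s) k b d.
Proof.
apply: pdgm_c => //; apply: corr_hg => //; [exact: degvE | exact: degeE].
Qed.

Lemma nIC_deg : nIC (@degv G) (@dege G) = cnIC lV lE (cdegv lE) (cdege lE).
Proof. apply: nICE => //; [exact: degvE | exact: degeE]. Qed.
End DegWrap.

Lemma cpdgm_out (G : graph) lV lE (cL : seq (cst (gV G) (gE G))) k b d :
  (size cL <= d)%N -> cpdgm lV lE cL k b d = 0.
Proof.
move=> h; rewrite /cpdgm /cprank.
have -> : (d < size cL)%N = false by apply/negbTE; rewrite -leqNgt.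
have -> : (d.+1 < size cL)%N = false by apply/negbTE; rewrite -leqNgt; apply: leqW.
by case: ifP => //; case: b => [|b]; rewrite !andbF.
Qed.

Lemma cpdgm_k2 (G : graph) lV lE (cL : seq (cst (gV G) (gE G))) k b d :
  cpdgm lV lE cL k.+2 b d = 0.
Proof. by rewrite /cpdgm /cprank /=; case: b => [|b]; rewrite !if_same. Qed.

Definition o3 (k : nat) : 'I_3 :=
  match k with 0 => @Ordinal 3 0 isT | 1 => @Ordinal 3 1 isT | _ => @Ordinal 3 2 isT end.
Definition srcG (e : 'I_3) : 'I_3 := match val e with 0 => o3 0 | 1 => o3 0 | _ => o3 2 end.
Definition tgtG (e : 'I_3) : 'I_3 := match val e with 0 => o3 0 | 1 => o3 1 | _ => o3 2 end.
Definition GG : graph := @Graph 'I_3 'I_3 srcG tgtG.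
Definition l3 : seq 'I_3 := [:: o3 0; o3 1; o3 2].

Definition o4 (k : nat) : 'I_4 :=
  match k with 0 => @Ordinal 4 0 isT | 1 => @Ordinal 4 1 isT | 2 => @Ordinal 4 2 isT
  | _ => @Ordinal 4 3 isT end.
Definition srcH (e : 'I_4) : 'I_4 :=
  match val e with 0 => o4 0 | 1 => o4 0 | 2 => o4 1 | _ => o4 3 end.
Definition tgtH (e : 'I_4) : 'I_4 :=
  match val e with 0 => o4 0 | 1 => o4 1 | 2 => o4 2 | _ => o4 3 end.
Definition HH : graph := @Graph 'I_4 'I_4 srcH tgtH.
Definition l4 : seq 'I_4 := [:: o4 0; o4 1; o4 2; o4 3].

Lemma enum3 : enum 'I_3 = l3.
Proof. apply: (inj_map val_inj); rewrite val_enum_ord. reflexivity. Qed.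
Lemma enum4 : enum 'I_4 = l4.
Proof. apply: (inj_map val_inj); rewrite val_enum_ord. reflexivity. Qed.

Definition lGV : seq (gV GG) := l3.
Definition lGE : seq (gE GG) := l3.
Definition lHV : seq (gV HH) := l4.
Definition lHE : seq (gE HH) := l4.

Definition cfbG := cfb lGV lGE (cdegv lGE) (cdege lGE).
Definition cfbH := cfb lHV lHE (cdegv lHE) (cdege lHE).
Definition sch : seq (bool * nat) :=
  [:: (true, 0%N); (true, 1%N); (true, 2%N); (false, 0%N); (false, 2%N); (false, 1%N)].

Lemma fb_check : all (fun k => all (fun d => all (fun b =>
   cprank lGV lGE cfbG k b d == cprank lHV lHE cfbH k b d) (iota 0 6)) (iota 0 6)) (iota 0 2).
Proof. vm_compute. reflexivity. Qed.

Lemma sizeG : size cfbG = 6%N. Proof. vm_compute. reflexivity. Qed.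
Lemma sizeH : size cfbH = 6%N. Proof. vm_compute. reflexivity. Qed.

Lemma cprank_eq k b d : cprank lGV lGE cfbG k b d = cprank lHV lHE cfbH k b d.
Proof.
rewrite /cprank sizeG sizeH.
case: ifP => // /andP [hb hd].
have h1 : d \in iota 0 6 by rewrite mem_iota.
have h2 : b \in iota 0 6 by rewrite mem_iota /=; apply: leq_ltn_trans hd.
have hk : forall k, (k < 2)%N -> k \in iota 0 2 by move=> k' hk'; rewrite mem_iota.
case: k => [|[|k]] //.
  have := fb_check => /allP /(_ 0%N (hk 0%N isT)) /allP /(_ d h1) /allP /(_ b h2) /eqP.
  by rewrite /cprank sizeG sizeH hb hd.
have := fb_check => /allP /(_ 1%N (hk 1%N isT)) /allP /(_ d h1) /allP /(_ b h2) /eqP.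
by rewrite /cprank sizeG sizeH hb hd.
Qed.

Lemma part2 : exists G H : graph,
      (forall k b d : nat,
          pdgm (fb_stages (@degv G) (@dege G)) k b d
          = pdgm (fb_stages (@degv H) (@dege H)) k b d) /\
      exists s : seq (bool * nat),
        hourglass_schedule (nIC (@degv G) (@dege G)) s /\
        hourglass_schedule (nIC (@degv H) (@dege H)) s /\
        exists k b d : nat,
          pdgm (hg_stages (@degv G) (@dege G) s) k b d
          <> pdgm (hg_stages (@degv H) (@dege H) s) k b d.
Proof.
exists GG, HH; split.
  move=> k b d.
  rewrite (pdgm_fb_deg (lV := lGV) (lE := lGE) enum3 enum3).
  rewrite (pdgm_fb_deg (lV := lHV) (lE := lHE) enum4 enum4).
  rewrite -/cfbG -/cfbH.
  by case: b => [|b]; rewrite /cpdgm !cprank_eq.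
exists sch.
have hsch : hourglass_schedule 3 sch.
  split; first by vm_compute.
  by move=> [|[|[|j]]].
split; first by rewrite (nIC_deg (lV := lGV) (lE := lGE) enum3 enum3); vm_compute.
split; first by rewrite (nIC_deg (lV := lHV) (lE := lHE) enum4 enum4); vm_compute.
exists 1%N, 5%N, 5%N.
rewrite (pdgm_hg_deg (lV := lGV) (lE := lGE) enum3 enum3).
rewrite (pdgm_hg_deg (lV := lHV) (lE := lHE) enum4 enum4).
by vm_compute.
Qed.

Local Close Scope ring_scope.

Theorem proposition2 :
  (forall (R : realDomainType) (G : graph) (fv : gV G -> R) (fe : gE G -> R),
      is_filtration fv fe ->
      exists s : seq (bool * nat),
        hourglass_schedule (nIC fv fe) s /\
        hg_stages fv fe s = empty_stage G :: fb_stages fv fe)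
  /\
  (exists G H : graph,
      (forall k b d : nat,
          pdgm (fb_stages (@degv G) (@dege G)) k b d
          = pdgm (fb_stages (@degv H) (@dege H)) k b d) /\
      exists s : seq (bool * nat),
        hourglass_schedule (nIC (@degv G) (@dege G)) s /\
        hourglass_schedule (nIC (@degv H) (@dege H)) s /\
        exists k b d : nat,
          pdgm (hg_stages (@degv G) (@dege G) s) k b d
          <> pdgm (hg_stages (@degv H) (@dege H) s) k b d).
Proof.
split; [exact: part1 | exact: part2].
Qed.
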